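(* Assume the standing assumption (S), and suppose $|\eta(x)|\le U<\infty$ for all $x\in I$. Then there exists $A\in\mathbb R_+$ such that $a_N(y)\le\frac{A}{\sqrt N}$ for all $N\ge N_0$ and all $y\in I$.
   Context: Let $-\infty\le l<r\le\infty$, $I=(l,r)$, $\eta\colon\mathbb R\to\mathbb R$ Borel with $\eta\ne0$ on $I$, $1/\eta^2\in L^1_{\mathrm{loc}}(I)$, $\eta=0$ off $I$, $m\in I$. $q(y,x)=\int_y^x\int_y^u\frac{2}{\eta^2(z)}dz\,du\in[0,\infty]$; $q(l+)=\lim_{x\searrow l}q(m,x)$, $q(r-)=\lim_{x\nearrow r}q(m,x)$. $\mu\ne\delta_0$ is a centered probability measure with finite first moment, $G_y(a)=\int q(y,y+ax)\mu(dx)$ for $y\in I$, $a\ge0$. Standing assumption (S): one of the following holds. (S1) $l=-\infty$, $r=\infty$, and there is $y_0\in I$ with $G_{y_0}(a)<\infty$ for all $a>0$. (S2) $l>-\infty$, $r=\infty$, $\inf\operatorname{supp}\mu>-\infty$, there is $y_0\in I$ with $\int_{\mathbb R_+}q(y_0,y_0+ax)\mu(dx)<\infty$ for all $a>0$; if $q(l+)<\infty$ then $\mu(\{\inf\operatorname{supp}\mu\})>0$; if $q(l+)=\infty$ then $\liminf_{y\to\infty}G_y(\bar a(y))>0$ and $\liminf_{y\searrow l}G_y(\bar a(y))>0$, where $\bar a(y)=\frac{l-y}{\inf\operatorname{supp}\mu}$. (S3) the mirror image of (S2): $l=-\infty$, $r<\infty$, $\sup\operatorname{supp}\mu<\infty$,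 there is $y_0\in I$ with $\int_{(-\infty,0]}q(y_0,y_0+ax)\mu(dx)<\infty$ for all $a>0$; if $q(r-)<\infty$ then $\mu(\{\sup\operatorname{supp}\mu\})>0$; if $q(r-)=\infty$ then $\liminf_{y\to-\infty}G_y(\bar a(y))>0$ and $\liminf_{y\nearrow r}G_y(\bar a(y))>0$, where $\bar a(y)=\frac{r-y}{\sup\operatorname{supp}\mu}$. (S4) $-\infty<l<r<\infty$, $\mu$ has bounded support; with $\bar a(y)=\frac{l-y}{\inf\operatorname{supp}\mu}\wedge\frac{r-y}{\sup\operatorname{supp}\mu}$: if $q(l+)<\infty$ then $\mu(\{\inf\operatorname{supp}\mu\})>0$; if $q(l+)=\infty$ then $\liminf_{y\searrow l}G_y(\bar a(y))>0$; if $q(r-)<\infty$ then $\mu(\{\sup\operatorname{supp}\mu\})>0$; if $q(r-)=\infty$ then $\liminf_{y\nearrow r}G_y(\bar a(y))>0$. Under (S) there is $N_0\in\mathbb N$ and, for $N\ge N_0$, the scale factor $a_N(y)=\sup\{a\ge0:G_y(a)\le\frac1N\}$ for $y\in I$ and $a_N=0$ at finite endpoints of $I$. *)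

(* Defs.v *)
From HB Require Import structures.
From mathcomp Require Import all_boot all_order all_algebra.
From mathcomp Require Import all_classical all_reals all_analysis.
Set Implicit Arguments. Unset Strict Implicit. Unset Printing Implicit Defensive.
Import Order.TTheory GRing.Theory Num.Theory.
Import numFieldNormedType.Exports.
Local Open Scope classical_set_scope.
Local Open Scope ring_scope.
Local Open Scope ereal_scope.

Section Defs.
Context {R : realType}.
Notation leb := (@lebesgue_measure R).

Definition inI (l r : \bar R) (x : R) : Prop := l < x%:E < r.

Definition twoinv (eta : R -> R) (z : R) : \bar R :=
  if eta z == 0%R then +oo else (2 / eta z ^+ 2)%:E.

(* q(y,x) = int_y^x int_y^u 2/eta^2(z) dz du  in [0, +oo]
   (oriented integrals; for x < y both orientations flip) *)
Definition q (eta : R -> R) (y x : R) : \bar R :=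
  if (y <= x)%R then
    \int[leb]_(u in `[y, x]%classic) \int[leb]_(z in `[y, u]%classic) twoinv eta z
  else
    \int[leb]_(u in `[x, y]%classic) \int[leb]_(z in `[u, y]%classic) twoinv eta z.

Definition q_lplus (eta : R -> R) (m l : R) : \bar R := lim (q eta m x @[x --> l^'+]).
Definition q_rminus (eta : R -> R) (m r : R) : \bar R := lim (q eta m x @[x --> r^'-]).

Definition supp (mu : set R -> \bar R) : set R :=
  [set x | forall e : R, (0 < e)%R -> 0 < mu (ball x e)].
Definition infsupp (mu : set R -> \bar R) : \bar R := ereal_inf [set x%:E | x in supp mu].
Definition supsupp (mu : set R -> \bar R) : \bar R := ereal_sup [set x%:E | x in supp mu].

Definition G (eta : R -> R) (mu : probability R R) (y a : R) : \bar R :=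
  \int[mu]_x q eta y (y + a * x).

Definition aN (eta : R -> R) (mu : probability R R) (N : nat) (y : R) : \bar R :=
  ereal_sup [set a%:E | a in [set a : R | (0 <= a)%R /\ G eta mu y a <= (N%:R^-1)%:E]].

Definition S1 (l r : \bar R) (eta : R -> R) (mu : probability R R) : Prop :=
  [/\ l = -oo, r = +oo &
   exists2 y0, inI l r y0 & forall a : R, (0 < a)%R -> G eta mu y0 a < +oo].

Definition S2 (l r : \bar R) (eta : R -> R) (mu : probability R R) (m : R) : Prop :=
  exists l0 : R, let abar := fun y : R => ((l0 - y) / fine (infsupp mu))%R in
  ((l = l0%:E) /\ (r = +oo) /\ (-oo < infsupp mu) /\ ((exists2 y0, inI l r y0 & forall a : R, (0 < a)%R ->
      \int[mu]_(x in [set x : R | (0 <= x)%R]) q eta y0 (y0 + a * x) < +oo)) /\ ((q_lplus eta m l0 < +oo -> 0 < mu [set fine (infsupp mu)])) /\ ((q_lplus eta m l0 = +oo ->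
      0 < limf_einf (fun y => G eta mu y (abar y)) (pinfty_nbhs R) /\
      0 < limf_einf (fun y => G eta mu y (abar y)) (l0^'+)))).

Definition S3 (l r : \bar R) (eta : R -> R) (mu : probability R R) (m : R) : Prop :=
  exists r0 : R, let abar := fun y : R => ((r0 - y) / fine (supsupp mu))%R in
  ((l = -oo) /\ (r = r0%:E) /\ (supsupp mu < +oo) /\ ((exists2 y0, inI l r y0 & forall a : R, (0 < a)%R ->
      \int[mu]_(x in [set x : R | (x <= 0)%R]) q eta y0 (y0 + a * x) < +oo)) /\ ((q_rminus eta m r0 < +oo -> 0 < mu [set fine (supsupp mu)])) /\ ((q_rminus eta m r0 = +oo ->
      0 < limf_einf (fun y => G eta mu y (abar y)) (ninfty_nbhs R) /\
      0 < limf_einf (fun y => G eta mu y (abar y)) (r0^'-)))).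

Definition S4 (l r : \bar R) (eta : R -> R) (mu : probability R R) (m : R) : Prop :=
  exists l0 r0 : R, let abar := fun y : R =>
     (Num.min ((l0 - y) / fine (infsupp mu)) ((r0 - y) / fine (supsupp mu)))%R in
  ((l = l0%:E) /\ (r = r0%:E) /\ (-oo < infsupp mu) /\ (supsupp mu < +oo) /\ ((q_lplus eta m l0 < +oo -> 0 < mu [set fine (infsupp mu)])) /\ ((q_lplus eta m l0 = +oo ->
      0 < limf_einf (fun y => G eta mu y (abar y)) (l0^'+))) /\ ((q_rminus eta m r0 < +oo -> 0 < mu [set fine (supsupp mu)])) /\ ((q_rminus eta m r0 = +oo ->
      0 < limf_einf (fun y => G eta mu y (abar y)) (r0^'-)))).

Definition standing_S (l r : \bar R) (eta : R -> R) (mu : probability R R) (m : R) : Prop :=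
  S1 l r eta mu \/ S2 l r eta mu m \/ S3 l r eta mu m \/ S4 l r eta mu m.

End Defs.

(* Main.v *)
Require Import Defs.
From HB Require Import structures.
From mathcomp Require Import all_boot all_order all_algebra.
From mathcomp Require Import all_classical all_reals all_analysis.
From mathcomp Require Import ring lra.
Import Order.TTheory GRing.Theory Num.Theory.
Import numFieldNormedType.Exports.
Local Open Scope classical_set_scope.
Local Open Scope ring_scope.
Local Open Scope ereal_scope.

Lemma le_int_T d (T : measurableType d) (R : realType) (mu : {measure set T -> \bar R})
  (f1 f2 : T -> \bar R) : (forall x, 0 <= f1 x) -> (forall x, f1 x <= f2 x) ->
  \int[mu]_x f1 x <= \int[mu]_x f2 x.
Proof.
move=> f10 f12.
have f20 x : 0 <= f2 x by apply: le_trans (f12 x).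
rewrite !ge0_integralTE//.
apply: ereal_sup_le => _ [h /= hf <-]; exists h => //= x.
exact: le_trans (f12 x).
Qed.

Lemma le_int_sub d (T : measurableType d) (R : realType) (mu : {measure set T -> \bar R})
  (D1 D2 : set T) (k : R) (f : T -> \bar R) : measurable D1 -> (0 <= k)%R ->
  (forall x, D2 x -> 0 <= f x) -> (forall x, D1 x -> D2 x /\ k%:E <= f x) ->
  k%:E * mu D1 <= \int[mu]_(x in D2) f x.
Proof.
move=> mD1 k0 f0 h.
rewrite -(integral_cst mu mD1 k%:E).
rewrite (integral_mkcond D1) (integral_mkcond D2).
apply: le_int_T => x; rewrite /patch.
  case: ifP => _ //=; exact: lee_fin.
case: ifP => [/set_mem /h [D2x kf]|_]; first by rewrite mem_set.
by case: ifP => // /set_mem /f0.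
Qed.
Lemma leb_itv (R : realType) (a b : R) : (a <= b)%R ->
  (@lebesgue_measure R) `[a, b]%classic = (b - a)%:E.
Proof.
move=> ab; rewrite lebesgue_measure_itv /= lte_fin.
case: ifPn => [_|]; first by rewrite EFinN.
rewrite -leNgt => ba; have -> : b = a by apply/le_anti/andP.
by rewrite subrr.
Qed.

Lemma le_int_sub_leb (R : realType)
  (D1 D2 : set R) (k : R) (f : R -> \bar R) : @measurable _ (measurableTypeR R) D1 -> (0 <= k)%R ->
  (forall x, D2 x -> 0 <= f x) -> (forall x, D1 x -> D2 x /\ k%:E <= f x) ->
  k%:E * (@lebesgue_measure R) D1 <= \int[@lebesgue_measure R]_(x in D2) f x.
Proof. exact: (@le_int_sub _ (measurableTypeR R) R (@lebesgue_measure R)). Qed.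

Section qbound.
Context {R : realType} (eta : R -> R) (c : R) (c0 : (0 < c)%R)
  (hc : forall z, c%:E <= twoinv eta z).

Lemma twoinv_ge0 z : 0 <= twoinv eta z.
Proof. apply: le_trans (hc z); rewrite lee_fin; exact: ltW. Qed.

Lemma inner a b : (a <= b)%R ->
  (c * (b - a))%:E <= \int[@lebesgue_measure R]_(z in `[a, b]%classic) twoinv eta z.
Proof.
move=> ab.
have := @le_int_sub_leb R `[a, b]%classic `[a, b]%classic c (twoinv eta).
rewrite leb_itv // -EFinM; apply => //.
- exact: ltW.
- by move=> x _; exact: twoinv_ge0.
Qed.

Lemma q_ge y x : (c / 4 * (x - y) ^+ 2)%:E <= q eta y x.
Proof.
rewrite /q; case: ifP => yx.
  set mid := ((y + x) / 2)%R.
  have := @le_int_sub_leb R `[mid, x]%classic `[y, x]%classic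
    (c * ((x - y) / 2)) (fun u => \int[lebesgue_measure]_(z in `[y, u]%classic) twoinv eta z).
  rewrite leb_itv; last by rewrite /mid; lra.
  rewrite -EFinM.
  have -> : (c * ((x - y) / 2) * (x - mid) = c / 4 * (x - y) ^+ 2)%R by rewrite /mid; field.
  apply => //.
  - by apply: mulr_ge0; [exact: ltW | lra].
  - by move=> u _; apply: integral_ge0 => z _; exact: twoinv_ge0.
  - move=> u; rewrite /= in_itv /= => /andP [mu ux]; split.
      by rewrite /= in_itv /=; apply/andP; split => //; rewrite /mid in mu; lra.
    have yu : (y <= u)%R by rewrite /mid in mu; lra.
    apply: le_trans (inner y u yu).
    by rewrite lee_fin; apply: ler_wpM2l; [exact: ltW | rewrite /mid in mu; lra].
have xy : (x <= y)%R by move/negbT: yx; rewrite -ltNge => /ltW.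
set mid := ((y + x) / 2)%R.
have := @le_int_sub_leb R `[x, mid]%classic `[x, y]%classic
  (c * ((y - x) / 2)) (fun u => \int[lebesgue_measure]_(z in `[u, y]%classic) twoinv eta z).
rewrite leb_itv; last by rewrite /mid; lra.
rewrite -EFinM.
have -> : (c * ((y - x) / 2) * (mid - x) = c / 4 * (x - y) ^+ 2)%R by rewrite /mid; field.
apply => //.
- by apply: mulr_ge0; [exact: ltW | lra].
- by move=> u _; apply: integral_ge0 => z _; exact: twoinv_ge0.
- move=> u; rewrite /= in_itv /= => /andP [xu um]; split.
    by rewrite /= in_itv /=; apply/andP; split => //; rewrite /mid in um; lra.
  have uy : (u <= y)%R by rewrite /mid in um; lra.
  apply: le_trans (inner u y uy).
  by rewrite lee_fin; apply: ler_wpM2l; [exact: ltW | rewrite /mid in um; lra].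
Qed.

End qbound.

Definition Bset (R : realType) (d : R) : set R :=
  `]-oo, (- d)%R]%classic `|` `[d, +oo[%classic.
Arguments Bset {R}.

Lemma Bset_meas (R : realType) (d : R) : measurable (Bset d).
Proof. by apply: measurableU; exact: measurable_itv. Qed.

Lemma Bset_ge (R : realType) (d : R) x : Bset d x -> (d ^+ 2 <= x ^+ 2)%R \/ (d < 0)%R.
Proof.
have [d0|d0] := ltP d 0%R; first by right.
by rewrite /Bset /= !in_itv /= andbT => -[] h; left; nra.
Qed.

Lemma exists_delta (R : realType) (mu : probability R R) :
  (exists2 A : set R, measurable A & mu A <> @dirac _ R (0%R : R) R A) ->
  exists2 d : R, (0 < d)%R & 0 < mu (Bset d).
Proof.
move=> [A mA hA].
case: (pselect (exists n : nat, 0 < mu (Bset (n.+1%:R^-1 : R)))) => [[n hn]|hno].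
  by exists (n.+1%:R^-1)%R; rewrite // invr_gt0 ltr0Sn.
exfalso.
have hB0 n : mu (Bset (n.+1%:R^-1 : R)) = 0.
  have := measure_ge0 mu (Bset (n.+1%:R^-1 : R)).
  rewrite le_eqVlt => /orP [/eqP <-//|h]; exfalso; apply: hno; by exists n.
have : mu.-negligible (\bigcup_n Bset (n.+1%:R^-1 : R)).
  apply: negligible_bigcup => n; exists (Bset (n.+1%:R^-1 : R)); split; [exact: Bset_meas|exact: hB0|done].
move=> [Z [mZ Z0 sZ]].
have nz x : x <> 0%R -> Z x.
  move=> x0; apply: sZ.
  have : (0 < `|x|)%R by rewrite normr_gt0; apply/eqP.
  move=> /ltr_add_invr [k]; rewrite add0r => hk.
  exists k => //; rewrite /Bset /= !in_itv /= andbT.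
  have [xn|xp] := ltP x 0%R.
    by left; rewrite ltr0_norm // in hk; move: hk; generalize (k.+1%:R^-1 : R)%R => e; lra.
  by right; rewrite ger0_norm // in hk; move: hk; generalize (k.+1%:R^-1 : R)%R => e; lra.
apply: hA; rewrite diracE.
case: (boolP (0%R \in A)) => A0.
  have hC : mu (~` A) = 0.
    apply/eqP; rewrite eq_le measure_ge0 andbT -Z0.
    apply: le_measure; rewrite ?inE //; first exact: measurableC.
    move=> x /= nAx; apply: nz => x0; apply: nAx; rewrite x0.
    by move/set_mem: A0.
  move: hC; rewrite probability_setC // => hC.
  have fA : mu A \is a fin_num.
    by rewrite ge0_fin_numE ?measure_ge0 // (le_lt_trans (probability_le1 _ mA)) ?ltey.
  have : 1 - mu A + mu A = mu A by rewrite hC add0e.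
  by rewrite subeK // => h; rewrite -h.
change (mu A = 0); apply/eqP; rewrite eq_le measure_ge0 andbT -Z0.
apply: le_measure; rewrite ?inE //.
move=> x Ax; apply: nz => x0; rewrite x0 in Ax; move/negP: A0; apply; exact: mem_set.
Qed.

Lemma le_int_sub_prob (R : realType) (mu : probability R R)
  (D1 D2 : set R) (k : R) (f : R -> \bar R) : measurable D1 -> (0 <= k)%R ->
  (forall x, D2 x -> 0 <= f x) -> (forall x, D1 x -> D2 x /\ k%:E <= f x) ->
  k%:E * mu D1 <= \int[mu]_(x in D2) f x.
Proof. exact: le_int_sub. Qed.

Theorem mainTheorem12 (R : realType) (l r : \bar R) (eta : R -> R) (m : R)
  (mu : probability R R) (U : R) (N0 : nat)
  (hlr : l < r)
  (heta_meas : measurable_fun setT eta)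
  (heta_nz : forall x : R, inI l r x -> eta x != 0%R)
  (heta_off : forall x : R, ~ inI l r x -> eta x = 0%R)
  (hloc : forall a b : R, inI l r a -> inI l r b ->
     (@lebesgue_measure R).-integrable `[a, b]%classic (fun z => ((eta z ^+ 2)^-1)%:E))
  (hm : inI l r m)
  (hmu_int : mu.-integrable setT (fun x : R => x%:E))
  (hmu_centered : \int[mu]_x x%:E = 0)
  (hmu_ndirac : exists2 A : set R, measurable A & mu A <> @dirac _ R (0%R : R) R A)
  (hS : standing_S l r eta mu m)
  (hN0pos : (0 < N0)%N)
  (hN0 : forall N : nat, (N0 <= N)%N -> forall y : R, inI l r y -> aN eta mu N y < +oo)
  (hU : forall x : R, inI l r x -> (`|eta x| <= U)%R) :
  exists A : R, (0 <= A)%R /\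
    forall N : nat, (N0 <= N)%N -> forall y : R, inI l r y ->
      aN eta mu N y <= (A / Num.sqrt N%:R)%:E.
Proof.
have U0 : (0 < U)%R.
  have em := heta_nz m hm; have h := hU m hm.
  by apply: lt_le_trans h; rewrite normr_gt0.
set c := (2 / U ^+ 2)%R.
have c0 : (0 < c)%R by rewrite /c divr_gt0 // exprn_gt0.
have hc : forall z, c%:E <= twoinv eta z.
  move=> z; rewrite /twoinv; case: ifPn => [_|ez]; first exact: leey.
  have Iz : inI l r z.
    by apply: contrapT => nI; move/eqP: ez; apply; exact: heta_off.
  rewrite lee_fin /c; apply: ler_wpM2l => //.
  have e2 : (0 < eta z ^+ 2)%R by rewrite lt_def sqrf_eq0 ez sqr_ge0.
  have u2 : (0 < U ^+ 2)%R by rewrite exprn_gt0.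
  rewrite lef_pV2 ?posrE //.
  rewrite -ler_sqrt ?sqr_ge0 // !sqrtr_sqr (ger0_norm (ltW U0)); exact: hU.
have [dl dl0 hB] := @exists_delta R mu hmu_ndirac.
set p := fine (mu (Bset dl)).
have muB : mu (Bset dl) = p%:E.
  rewrite /p fineK // ge0_fin_numE ?measure_ge0 //.
  by rewrite (le_lt_trans (probability_le1 _ (@Bset_meas R dl))) ?ltey.
have p0 : (0 < p)%R by rewrite -lte_fin -muB.
have c40 : (0 <= c / 4)%R by apply: divr_ge0; [exact: ltW|done].
set K := (c / 4 * dl ^+ 2 * p)%R.
have K0 : (0 < K)%R.
  by rewrite /K mulr_gt0 // mulr_gt0 ?exprn_gt0 // divr_gt0.
have hG : forall y a : R, (K * a ^+ 2)%:E <= G eta mu y a.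
  move=> y a; rewrite /G.
  have := @le_int_sub_prob R mu (Bset dl) setT (c / 4 * a ^+ 2 * dl ^+ 2)
    (fun x => q eta y (y + a * x)) (@Bset_meas R dl).
  rewrite muB -EFinM.
  have -> : (c / 4 * a ^+ 2 * dl ^+ 2 * p = K * a ^+ 2)%R by rewrite /K; ring.
  apply.
  - by apply: mulr_ge0; [apply: mulr_ge0; [exact: c40|exact: sqr_ge0]|exact: sqr_ge0].
  - move=> x _; apply: le_trans (@q_ge R eta c c0 hc y (y + a * x)).
    by rewrite lee_fin; apply: mulr_ge0; [exact: c40|exact: sqr_ge0].
  - move=> x Bx; split => //; apply: le_trans (@q_ge R eta c c0 hc y (y + a * x)).
    rewrite lee_fin.
    case: (@Bset_ge R dl x Bx) => [hx|]; last by rewrite ltNge (ltW dl0).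
    have -> : (y + a * x - y = a * x)%R by ring.
    rewrite exprMn -mulrA; apply: ler_wpM2l => //.
    by apply: ler_wpM2l => //; exact: sqr_ge0.
exists (Num.sqrt K^-1); split; first exact: sqrtr_ge0.
move=> N hN y Iy.
have Npos : (0 < N%:R :> R)%R by rewrite ltr0n; apply: leq_trans hN.
rewrite /aN; apply: ge_ereal_sup => _ [a [a0 Ga] <-]; rewrite lee_fin.
have hKa : (K * a ^+ 2 <= N%:R^-1)%R by rewrite -lee_fin; apply: le_trans (hG y a) Ga.
have ha2 : (a ^+ 2 <= K^-1 * N%:R^-1)%R.
  have -> : (a ^+ 2 = K^-1 * (K * a ^+ 2))%R by rewrite mulrA mulVf ?mul1r // gt_eqF.
  by apply: ler_wpM2l => //; rewrite invr_ge0 ltW.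
rewrite -sqrtrV ?(ltW Npos) // -sqrtrM ?invr_ge0 ?(ltW K0) //.
rewrite -(ger0_norm a0) -sqrtr_sqr ler_sqrt //.
by rewrite mulr_ge0 // invr_ge0 ltW.
Qed.
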